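(* Let $(\Omega,\mathcal{F},\mathbb{P})$ be a nonatomic probability space, let $\delta:[0,1]\to[0,1]$ be concave and increasing with $\delta(0)=0$, $\delta(1)=1$, and let $\mathcal{A}_\delta=\{X\in L^\infty:\rho_\delta(X)\le0\}$. Let $S=(S_0,S_T)$ be a traded asset with $S_T\in L^\infty$. Then $\rho_{\mathcal{A}_\delta,S}$ is finite-valued (hence continuous) on $L^\infty$ if and only if $\delta(F_{S_T}(x))<1$ for some $x>0$. In particular, if $\delta$ is strictly increasing on some left neighborhood of $1$, then $\rho_{\mathcal{A}_\delta,S}$ is finite-valued on $L^\infty$.
   Context: $F_X$ is the distribution function of $X$. The distortion risk measure is $\rho_\delta(X)=\int_{-\infty}^0\delta(F_X(x))\,dx-\int_0^\infty(1-\delta(F_X(x)))\,dx$ for $X\in L^\infty$. A traded asset is $S=(S_0,S_T)$ with $S_0>0$, $S_T\ge0$ a.s., $S_T\ne0$. For $\mathcal{B}\subset L^\infty$, $\rho_{\mathcal{B},S}(X)=\inf\{m\in\mathbb{R}:X+\frac{m}{S_0}S_T\in\mathcal{B}\}$. *)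

(* Defs.v *)
From HB Require Import structures.
From mathcomp Require Import all_boot all_order all_algebra.
From mathcomp Require Import all_classical all_reals all_analysis.
Set Implicit Arguments. Unset Strict Implicit. Unset Printing Implicit Defensive.
Import Order.TTheory GRing.Theory Num.Theory.
Import numFieldNormedType.Exports.
Local Open Scope classical_set_scope.
Local Open Scope ring_scope.

Section Defs.
Context {d : measure_display} {T : measurableType d} {R : realType}.
Variable P : probability T R.

Definition nonatomic : Prop :=
  forall A : set T, measurable A -> (0 < P A)%E ->
    exists B : set T, [/\ measurable B, B `<=` A, (0 < P B)%E & (P B < P A)%E].

(* L^infty (as functions; everything below is invariant under a.s. equality) *)
Definition Linf (X : T -> R) : Prop :=
  measurable_fun setT X /\ exists M : R, {ae P, forall w, `|X w| <= M}.

Definition distr_fun (X : T -> R) (x : R) : R := fine (P [set w | X w <= x]).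

Definition rho_distortion (delta : R -> R) (X : T -> R) : \bar R :=
  ((\int[lebesgue_measure]_(x in `]-oo, 0%R]) (delta (distr_fun X x))%:E)
   - (\int[lebesgue_measure]_(x in `]0%R, +oo[) (1 - delta (distr_fun X x))%:E))%E.

Definition acc_distortion (delta : R -> R) : set (T -> R) :=
  [set X | Linf X /\ (rho_distortion delta X <= 0)%E].

Definition traded_asset (S0 : R) (ST : T -> R) : Prop :=
  [/\ 0 < S0, measurable_fun setT ST, {ae P, forall w, 0 <= ST w}
    & ~ {ae P, forall w, ST w = 0}].

Definition rho_BS (B : set (T -> R)) (S0 : R) (ST : T -> R) (X : T -> R) : \bar R :=
  ereal_inf [set m%:E | m in [set m : R | B (fun w => X w + m / S0 * ST w)]].

End Defs.

Definition distortion_fun {R : realType} (delta : R -> R) : Prop :=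
  [/\ (forall x y, 0 <= x -> x <= y -> y <= 1 -> delta x <= delta y),
      (forall x y t, 0 <= x <= 1 -> 0 <= y <= 1 -> 0 <= t <= 1 ->
          t * delta x + (1 - t) * delta y <= delta (t * x + (1 - t) * y)),
      delta 0 = 0 & delta 1 = 1].

(* Main.v *)
Require Import Defs.
From HB Require Import structures.
From mathcomp Require Import all_boot all_order all_algebra.
From mathcomp Require Import all_classical all_reals all_analysis.
From mathcomp Require Import measurable_realfun.
From mathcomp Require Import lra.
Import Order.TTheory GRing.Theory Num.Theory.
Import numFieldNormedType.Exports.
Local Open Scope classical_set_scope.
Local Open Scope ring_scope.



Section H.
Context {d : measure_display} {T : measurableType d} {R : realType}.
Variable P : probability T R.

Definition pr (A : set T) : R := fine (P A).

Lemma pr_ge0 A : 0 <= pr A.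
Proof. by apply: fine_ge0; exact: measure_ge0. Qed.

Lemma Pfin A : measurable A -> P A \is a fin_num.
Proof. by move=> mA; rewrite fin_num_measure. Qed.

Lemma pr_le A B : measurable A -> measurable B -> P.-negligible (A `\` B) ->
  pr A <= pr B.
Proof.
move=> mA mB [N [mN N0 sN]].
rewrite /pr; apply: fine_le; rewrite ?Pfin//.
apply: (@le_trans _ _ (P (B `|` N))).
  apply: le_measure; rewrite ?inE//; first exact: measurableU.
  by move=> w Aw; case: (pselect (B w)) => Bw; [left|right; apply: sN].
apply: (le_trans (measureU2 _ _ _)) => //.
  have h (x y : \bar R) : y = 0%E -> (x + y <= x)%E by move=> ->; rewrite adde0.
  by apply: h; exact: N0.
Qed.

Lemma pr_setT : pr setT = 1.
Proof. by rewrite /pr probability_setT. Qed.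

Lemma pr_le1 A : measurable A -> pr A <= 1.
Proof.
move=> mA; rewrite -pr_setT; apply: pr_le => //.
by rewrite setDT; exact: negligible_set0.
Qed.

Lemma pr_eq1 A : measurable A -> P.-negligible (~` A) -> pr A = 1.
Proof.
move=> mA nA; apply/eqP; rewrite eq_le pr_le1//= -pr_setT.
by apply: pr_le => //; rewrite setTD.
Qed.

Lemma pr_eq0 A : measurable A -> P.-negligible A -> pr A = 0.
Proof.
move=> mA nA; apply/eqP; rewrite eq_le pr_ge0 andbT.
have -> : 0 = pr set0 by rewrite /pr measure0.
by apply: pr_le => //; rewrite setD0.
Qed.

End H.
Section I.
Context {R : realType}.
Notation lam := (@lebesgue_measure R).

Lemma int_ub (D C : set R) (f : R -> R) : measurable D -> measurable C ->
  measurable_fun D f -> (forall x, D x -> 0 <= f x) ->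
  (forall x, D x -> f x <= \1_C x) ->
  (\int[lam]_(x in D) (f x)%:E <= lam C)%E.
Proof.
move=> mD mC mf f0 f1.
apply: (@le_trans _ _ (\int[lam]_(x in D) (\1_C x)%:E)%E).
  apply: ge0_le_integral => //.
  - exact/measurable_EFinP.
  - by apply/measurable_EFinP; exact: measurable_indic.
apply: (@le_trans _ _ (lam (C `&` D))).
  by rewrite le_eqVlt; apply/orP; left; apply/eqP; exact: integral_indic.
apply: le_measure; rewrite ?inE//.
exact: measurableI.
Qed.

Lemma int_lb (D C : set R) (f : R -> R) (k : R) : measurable D -> measurable C ->
  C `<=` D -> measurable_fun D f -> (forall x, D x -> 0 <= f x) ->
  0 <= k -> (forall x, C x -> k <= f x) ->
  (k%:E * lam C <= \int[lam]_(x in D) (f x)%:E)%E.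
Proof.
move=> mD mC CD mf f0 k0 fk.
apply: (@le_trans _ _ (\int[lam]_(x in C) (f x)%:E)%E); last first.
  apply: ge0_subset_integral => //.
  exact/measurable_EFinP.
rewrite -integral_cst//; apply: ge0_le_integral => //.
apply/measurable_EFinP; exact: (measurable_funS mD CD mf).
Qed.

Lemma leb_itv (a b : R) (x y : bool) : a < b ->
  lam [set` Interval (BSide x a) (BSide y b)] = (b - a)%:E.
Proof.
move=> ab; rewrite lebesgue_measure_itv/=.
by rewrite lte_fin ab.
Qed.

End I.

Section Main.
Context {d : measure_display} {T : measurableType d} {R : realType}.
Variable P : probability T R.
Variable delta : R -> R.
Hypothesis Hd : distortion_fun delta.
Notation lam := (@lebesgue_measure R).

Lemma d_mono x y : 0 <= x -> x <= y -> y <= 1 -> delta x <= delta y.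
Proof. by case: Hd => h _ _ _; exact: h. Qed.

Lemma d_ge0 x : 0 <= x <= 1 -> 0 <= delta x.
Proof.
case/andP=> x0 x1; case: Hd => _ _ h0 _; rewrite -h0; exact: d_mono.
Qed.

Lemma d_le1 x : 0 <= x <= 1 -> delta x <= 1.
Proof.
case/andP=> x0 x1; case: Hd => _ _ _ h1; rewrite -[X in _ <= X]h1; exact: d_mono.
Qed.

Lemma d_ge x : 0 <= x <= 1 -> x <= delta x.
Proof.
move=> /andP[x0 x1]; case: Hd => _ hc h0 h1.
have := hc 1 0 x; rewrite h0 h1 !mulr1 !mulr0 !addr0.
by apply; rewrite ?ler01 ?lexx ?x0 ?x1.
Qed.

Lemma meas_le (Y : T -> R) x : measurable_fun setT Y ->
  measurable [set w | Y w <= x].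
Proof.
move=> mY; rewrite (_ : [set w | Y w <= x] = setT `&` Y @^-1` `]-oo, x]).
  exact: (mY measurableT _ (measurable_itv `]-oo, x])).
by rewrite setTI /preimage; apply/funext=> w /=; rewrite in_itv.
Qed.

Lemma meas_ge (Y : T -> R) x : measurable_fun setT Y ->
  measurable [set w | x <= Y w].
Proof.
move=> mY; rewrite (_ : [set w | x <= Y w] = setT `&` Y @^-1` `[x, +oo[).
  exact: (mY measurableT _ (measurable_itv `[x, +oo[)).
by rewrite setTI /preimage; apply/funext=> w /=; rewrite in_itv/= andbT.
Qed.

Lemma F_ge0 Y x : 0 <= distr_fun P Y x.
Proof. exact: pr_ge0. Qed.

Lemma F_le1 Y x : measurable_fun setT Y -> distr_fun P Y x <= 1.
Proof. by move=> mY; apply: pr_le1; exact: meas_le. Qed.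

Lemma F_mono Y x y : measurable_fun setT Y -> x <= y ->
  distr_fun P Y x <= distr_fun P Y y.
Proof.
move=> mY xy; apply: pr_le; [exact: meas_le|exact: meas_le|].
rewrite (_ : _ `\` _ = set0); first exact: negligible_set0.
apply/seteqP; split => w //= [h1 h2]; apply: h2; exact: le_trans xy.
Qed.

Lemma g_mono Y : measurable_fun setT Y ->
  {homo (fun x => delta (distr_fun P Y x)) : x y / x <= y}.
Proof.
move=> mY x y xy; apply: d_mono; rewrite ?F_ge0 ?F_le1//; exact: F_mono.
Qed.

Lemma g_meas Y D : measurable_fun setT Y -> measurable D ->
  measurable_fun D (fun x => delta (distr_fun P Y x)).
Proof. by move=> mY mD; apply: nondecreasing_measurable => //; exact: g_mono. Qed.

Lemma h_meas Y D : measurable_fun setT Y -> measurable D ->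
  measurable_fun D (fun x => 1 - delta (distr_fun P Y x)).
Proof.
move=> mY mD; apply: measurable_funB; first exact: measurable_cst.
exact: g_meas.
Qed.

End Main.


Section E.
Context {R : realType}.
Lemma E1 (x y : \bar R) (a b : R) : (a%:E <= x)%E -> (0 <= y)%E -> (y <= b%:E)%E ->
  b < a -> (0 < x - y)%E.
Proof.
case: x => [x| |] //; case: y => [y| |] //=; rewrite ?lee_fin => ax y0 yb ba.
  by rewrite -EFinB lte_fin subr_gt0 (le_lt_trans yb (lt_le_trans ba ax)).
by rewrite addye.
Qed.

Lemma E2 (x y : \bar R) (a b : R) : (0 <= x)%E -> (x <= a%:E)%E -> (b%:E <= y)%E ->
  a <= b -> (x - y <= 0)%E.
Proof.
case: x => [x| |] //; case: y => [y| |] //=; rewrite ?lee_fin => x0 xa by' ab.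
  by rewrite subr_le0 (le_trans xa (le_trans ab by')).
by rewrite addeNy leNye.
Qed.

Lemma ind1 (C : set R) x : C x -> \1_C x = 1 :> R.
Proof. by move=> Cx; rewrite indicE mem_set. Qed.
Lemma ind0 (C : set R) x : ~ C x -> \1_C x = 0 :> R.
Proof. by move=> Cx; rewrite indicE memNset. Qed.
End E.

Section S.
Context {d : measure_display} {T : measurableType d} {R : realType}.
Variable P : probability T R.
Variable delta : R -> R.
Hypothesis Hd : distortion_fun delta.

Lemma S2 (Y : T -> R) (M L eta : R) : measurable_fun setT Y ->
  0 < M -> 0 < L -> 0 < eta -> M <= eta * L ->
  (forall x, x < - M -> delta (distr_fun P Y x) = 0) ->
  (forall x, 0 < x <= L -> delta (distr_fun P Y x) <= 1 - eta) ->
  (rho_distortion P delta Y <= 0)%E.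
Proof.
move=> mY M0 L0 e0 ML Hlo Hmid.
have g01 x : 0 <= delta (distr_fun P Y x) <= 1.
  have F01 : 0 <= distr_fun P Y x <= 1 by rewrite F_ge0 F_le1.
  by rewrite (d_ge0 _ Hd _ F01) (d_le1 _ Hd _ F01).
rewrite /rho_distortion; apply: (@E2 _ _ _ M (eta * L)) => //.
- apply: integral_ge0 => x _; rewrite lee_fin; by case/andP: (g01 x).
- apply: (@le_trans _ _ (lebesgue_measure `[- M, 0])).
    apply: int_ub => //.
    + exact: g_meas.
    + by move=> x _; case/andP: (g01 x).
    + move=> x; rewrite /= in_itv/= => x0.
      have [xM|Mx] := ltP x (- M).
        by rewrite Hlo// ind0//= in_itv/= leNgt xM.
      by rewrite ind1 ?(andP (g01 x)).2//= in_itv/= Mx x0.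
  by rewrite lebesgue_measure_itv/= lte_fin oppr_lt0 M0 -EFinB sub0r opprK.
- have I2 : (eta%:E * lebesgue_measure `]0%R, L] <=
     \int[lebesgue_measure]_(x in `]0%R, +oo[) (1 - delta (distr_fun P Y x))%:E)%E.
    apply: int_lb => //.
    + by move=> x; rewrite /= !in_itv/= andbT => /andP[->].
    + exact: h_meas.
    + by move=> x _; rewrite subr_ge0; case/andP: (g01 x).
    + exact: ltW.
    + move=> x; rewrite /= in_itv/= => xL.
      by rewrite lerBrDr -lerBrDl; apply: Hmid.
  apply: le_trans I2.
  by rewrite lebesgue_measure_itv/= lte_fin L0 -EFinB subr0 -EFinM.
Qed.

Lemma S3 (Y : T -> R) (M K p : R) : measurable_fun setT Y ->
  0 < M -> 0 < K -> 0 <= p -> M < p * K ->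
  (forall x, M <= x -> delta (distr_fun P Y x) = 1) ->
  (forall x, - K <= x <= 0 -> p <= delta (distr_fun P Y x)) ->
  (0 < rho_distortion P delta Y)%E.
Proof.
move=> mY M0 K0 p0 MK Hhi Hmid.
have g01 x : 0 <= delta (distr_fun P Y x) <= 1.
  have F01 : 0 <= distr_fun P Y x <= 1 by rewrite F_ge0 F_le1.
  by rewrite (d_ge0 _ Hd _ F01) (d_le1 _ Hd _ F01).
rewrite /rho_distortion; apply: (@E1 _ _ _ (p * K) M) => //.
- have I1 : (p%:E * lebesgue_measure `[(- K)%R, 0%R] <=
     \int[lebesgue_measure]_(x in `]-oo, 0%R]) (delta (distr_fun P Y x))%:E)%E.
    apply: int_lb => //.
    + by move=> x; rewrite /= !in_itv/= => /andP[].
    + exact: g_meas.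
    + by move=> x _; case/andP: (g01 x).
  apply: le_trans I1.
  by rewrite lebesgue_measure_itv/= lte_fin oppr_lt0 K0 -EFinB sub0r opprK -EFinM.
- apply: integral_ge0 => x _; rewrite lee_fin subr_ge0; by case/andP: (g01 x).
- apply: (@le_trans _ _ (lebesgue_measure `]0%R, M[)).
    apply: int_ub => //.
    + exact: h_meas.
    + by move=> x _; rewrite subr_ge0; case/andP: (g01 x).
    + move=> x; rewrite /= in_itv/= andbT => x0.
      have [xM|Mx] := ltP x M.
        rewrite ind1 ?lerBlDr ?lerDl; first by case/andP: (g01 x).
        by rewrite /= in_itv/= x0 xM.
      rewrite Hhi// subrr ind0//= in_itv/= => /andP[_]; by rewrite ltNge Mx.
  by rewrite lebesgue_measure_itv/= lte_fin M0 -EFinB subr0.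
Qed.
End S.


Section P.
Context {d : measure_display} {T : measurableType d} {R : realType}.
Variable P : probability T R.

Lemma Linf_bd X : Linf P X -> exists M, 0 < M /\ P.-negligible [set w | M < `|X w|].
Proof.
case=> mX [M HM]; exists (`|M| + 1); split; first by rewrite ltr_wpDl.
apply: negligibleS HM => w /= h1 h2.
have : `|X w| <= `|M| by apply: le_trans h2 (ler_norm _).
by rewrite leNgt (lt_le_trans _ (ltW h1))// ltrDl.
Qed.

Lemma ae_neg (Z : T -> R) : {ae P, forall w, 0 <= Z w} ->
  P.-negligible [set w | Z w < 0].
Proof.
move=> h; apply: negligibleS h => w /= h1 h2.
by move: h1; rewrite ltNge h2.
Qed.

Lemma meas_lin (X Z : T -> R) (c : R) : measurable_fun setT X ->
  measurable_fun setT Z -> measurable_fun setT (fun w => X w + c * Z w).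
Proof.
move=> mX mZ; apply: measurable_funD => //; apply: measurable_funM => //.
Qed.

Lemma fin0 A : measurable A -> pr P A = 0 -> P A = 0%E.
Proof.
by move=> mA h; rewrite -(fineK (Pfin P _ mA)); rewrite /pr in h; rewrite h.
Qed.

Lemma eps (ST : T -> R) : measurable_fun setT ST ->
  {ae P, forall w, 0 <= ST w} -> ~ {ae P, forall w, ST w = 0} ->
  exists e, 0 < e /\ 0 < pr P [set w | e <= ST w].
Proof.
move=> mST h0 hn; apply: contrapT => H; apply: hn.
have Hn (n : nat) : P.-negligible [set w | n.+1%:R^-1 <= ST w].
  exists [set w | n.+1%:R^-1 <= ST w]; split => //.
    exact: meas_ge.
  apply: fin0; first exact: meas_ge.
  apply/eqP; rewrite eq_le pr_ge0 andbT leNgt; apply/negP => h.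
  by apply: H; exists n.+1%:R^-1; split => //; rewrite invr_gt0.
change (P.-negligible (~` [set w | ST w = 0])).
have NN := negligibleU (ae_neg _ h0) (negligible_bigcup Hn).
apply: negligibleS NN => w /= hw.
have [wlt|wge] := ltP (ST w) 0; first by left.
right; exists (Num.truncn (ST w)^-1) => //=.
have wpos : 0 < ST w by rewrite lt_neqAle wge andbT eq_sym; apply/eqP.
apply: ltW; rewrite invf_plt ?posrE//. exact: truncnS_gt.
Qed.

End P.


Section Q.
Context {d : measure_display} {T : measurableType d} {R : realType}.
Variable P : probability T R.
Variable delta : R -> R.
Hypothesis Hd : distortion_fun delta.
Variables (S0 : R) (ST : T -> R).
Hypothesis S00 : 0 < S0.
Hypothesis mST : measurable_fun setT ST.
Hypothesis h0 : {ae P, forall w, 0 <= ST w}.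
Hypothesis LST : Linf P ST.

Lemma accept_exists X : Linf P X ->
  (exists x0, 0 < x0 /\ delta (distr_fun P ST x0) < 1) ->
  exists m, acc_distortion P delta (fun w => X w + m / S0 * ST w).
Proof.
move=> LX [x0 [x0p dlt]].
have mX := LX.1.
have [M [M0 NX]] := Linf_bd P X LX.
have [MS [MS0 NS]] := Linf_bd P ST LST.
have NS' := ae_neg P ST h0.
set eta := 1 - delta (distr_fun P ST x0).
have eta0 : 0 < eta by rewrite /eta subr_gt0.
set L := M / eta.
have L0 : 0 < L by rewrite /L divr_gt0.
set c := (M + L) / x0.
have c0 : 0 < c by rewrite /c divr_gt0// addr_gt0.
have hcx : c * x0 = M + L by rewrite /c divfK// gt_eqF.
exists (c * S0); rewrite mulfK ?gt_eqF//.
have mY := meas_lin _ _ c mX mST.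
split.
  split => //; exists (M + c * MS).
  apply: negligibleS (negligibleU NX NS) => w /= hw.
  have [hx|hx] := leP `|X w| M; last by left.
  have [hs|hs] := leP `|ST w| MS; last by right.
  exfalso; apply: hw; apply: (le_trans (ler_normD _ _)).
  rewrite normrM gtr0_norm//; apply: lerD => //.
  by rewrite ler_pM2l.
apply: (S2 P delta Hd _ M L eta) => //.
- by rewrite /L mulrC divfK// gt_eqF.
- move=> x xM.
  have -> : distr_fun P (fun w => X w + c * ST w) x = 0.
    apply: pr_eq0; first exact: meas_le.
    apply: negligibleS (negligibleU NX NS') => w /= hw.
    have [hx|hx] := leP `|X w| M; last by left.
    have [hs|hs] := ltP (ST w) 0; first by right.
    exfalso; move: hx; rewrite ler_norml => /andP[h1 h2].
    have : 0 <= c * ST w by rewrite mulr_ge0// ltW.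
    lra.
  by case: Hd.
- move=> x /andP[x0' xL].
  have -> : 1 - eta = delta (distr_fun P ST x0) by rewrite /eta; lra.
  apply: (d_mono delta Hd); [exact: F_ge0| |exact: F_le1].
  apply: pr_le; [exact: meas_le|exact: meas_le|].
  apply: negligibleS NX => w /= [hy hs].
  rewrite ltNge; apply/negP; rewrite ler_norml => /andP[h1 h2].
  have : c * x0 < c * ST w by rewrite ltr_pM2l// ltNge; apply/negP.
  lra.
Qed.

Hypothesis hn : ~ {ae P, forall w, ST w = 0}.

Lemma accept_lb X : Linf P X ->
  exists m0, forall m, acc_distortion P delta (fun w => X w + m / S0 * ST w) ->
    m0 <= m.
Proof.
move=> LX.
have mX := LX.1.
have [M [M0 NX]] := Linf_bd P X LX.
have NS' := ae_neg P ST h0.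
have [e [e0 pe]] := eps P ST mST h0 hn.
set p := pr P [set w | e <= ST w] in pe.
have p1 : p <= 1 by apply: pr_le1; exact: meas_ge.
set K := (M + 1) / p.
have K0 : 0 < K by rewrite /K divr_gt0// addr_gt0.
have pK : p * K = M + 1 by rewrite /K mulrC divfK// gt_eqF.
set c0 := - (M + K) / e.
have c0e : c0 * e = - (M + K) by rewrite /c0 divfK// gt_eqF.
exists (c0 * S0) => m [LY rho0].
rewrite leNgt; apply/negP => hm.
set c := m / S0.
have cc0 : c < c0 by rewrite /c ltr_pdivrMr.
have c0n : c0 < 0 by rewrite /c0 pmulr_llt0 ?invr_gt0// oppr_lt0 addr_gt0.
have mY := meas_lin _ _ c mX mST.
pose Y := fun w => X w + c * ST w.
suff : (0 < rho_distortion P delta Y)%E.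
  by rewrite ltNge rho0.
apply: (S3 P delta Hd _ M K p) => //.
- exact: ltW.
- by rewrite pK ltrDl.
- move=> x Mx.
  have -> : distr_fun P (fun w => X w + c * ST w) x = 1.
    apply: pr_eq1; first exact: meas_le.
    apply: negligibleS (negligibleU NX NS') => w /= hw.
    have [hx|hx] := leP `|X w| M; last by left.
    have [hs|hs] := ltP (ST w) 0; first by right.
    exfalso; apply: hw; move: hx; rewrite ler_norml => /andP[h1 h2].
    have : c * ST w <= 0 by rewrite mulr_le0_ge0// ltW// (lt_trans cc0).
    lra.
  by case: Hd.
- move=> x /andP[Kx x0].
  apply: (le_trans (d_ge delta Hd _ _)); first by rewrite ltW.
  apply: (d_mono delta Hd); [exact: ltW| |exact: F_le1].
  apply: pr_le; [exact: meas_ge|exact: meas_le|].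
  apply: negligibleS NX => w /= [hs hy].
  rewrite ltNge; apply/negP; rewrite ler_norml => /andP[h1 h2]; apply: hy.
  have h3 : c * ST w <= c * e by rewrite ler_wnM2l// ltW// (lt_trans cc0).
  have h4 : c * e < c0 * e by rewrite ltr_pM2r.
  rewrite /Y; lra.
Qed.

Lemma rho_inf (Hx : forall x, 0 < x -> ~ delta (distr_fun P ST x) < 1) :
  rho_BS (acc_distortion P delta) S0 ST (fun _ => -1) = +oo%E.
Proof.
have NS' := ae_neg P ST h0.
rewrite /rho_BS.
set S := (X in ereal_inf X).
suff -> : S = set0 by rewrite ereal_inf0.
apply/seteqP; split => // y [m [LY rho0] _] /=.
set c := m / S0 in LY rho0.
pose Y := fun w => -1 + c * ST w.
have mY : measurable_fun setT Y.
  by apply: measurable_funD => //; apply: measurable_funM.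
have key x : -1 < x -> delta (distr_fun P Y x) = 1.
  move=> x1.
  have [cle|cgt] := leP c 0.
    have -> : distr_fun P Y x = 1.
      apply: pr_eq1; first exact: meas_le.
      apply: negligibleS NS' => w /= hw.
      rewrite ltNge; apply/negP => hs; apply: hw.
      have : c * ST w <= 0 by rewrite mulr_le0_ge0.
      rewrite /Y; lra.
    by case: Hd.
  have -> : distr_fun P Y x = distr_fun P ST ((x + 1) / c).
    rewrite /distr_fun; congr (fine (P _)).
    apply/seteqP; split => w /=; rewrite ler_pdivlMr// /Y => h; lra.
  have F01 : 0 <= distr_fun P ST ((x + 1) / c) <= 1 by rewrite F_ge0 F_le1.
  apply/eqP; rewrite eq_le (d_le1 delta Hd _ F01) /= leNgt; apply/negP.
  by apply: Hx; apply: divr_gt0 => //; lra.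
have : (0 < rho_distortion P delta Y)%E.
  apply: (S3 P delta Hd _ (1/4) (1/2) 1) => //.
  - lra.
  - move=> x x4; apply: key; lra.
  - move=> x /andP[x2 _]; rewrite key//; lra.
by rewrite ltNge rho0.
Qed.

Lemma fin_part (Hx : exists x0, 0 < x0 /\ delta (distr_fun P ST x0) < 1) X :
  Linf P X -> rho_BS (acc_distortion P delta) S0 ST X \is a fin_num.
Proof.
move=> LX.
have [m Hm] := accept_exists X LX Hx.
have [m0 Hm0] := accept_lb X LX.
rewrite /rho_BS; set S := (Y in ereal_inf Y).
have ub : (ereal_inf S <= m%:E)%E by apply: ereal_inf_lbound; exists m.
have lb : (m0%:E <= ereal_inf S)%E.
  by apply: le_ereal_inf_tmp => _ [m' hm' <-]; rewrite lee_fin; exact: Hm0.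
move: ub lb; case: (ereal_inf S) => //.
Qed.

End Q.

Theorem proposition8p1 (d : measure_display) (T : measurableType d) (R : realType)
  (P : probability T R) (delta : R -> R) (S0 : R) (ST : T -> R) :
  nonatomic P -> distortion_fun delta ->
  traded_asset P S0 ST -> Linf P ST ->
  ((forall X, Linf P X ->
      rho_BS (acc_distortion P delta) S0 ST X \is a fin_num)
   <-> (exists x : R, 0 < x /\ delta (distr_fun P ST x) < 1))
  /\
  ((exists a : R, 0 <= a < 1 /\
      (forall x y, a <= x -> x < y -> y <= 1 -> delta x < delta y)) ->
   forall X, Linf P X -> rho_BS (acc_distortion P delta) S0 ST X \is a fin_num).
Proof.
move=> _ Hd [S00 mST h0 hn] LST.
have Hfin := fin_part P delta Hd S0 ST S00 mST h0 LST hn.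
split; [split|].
- move=> H; apply: contrapT => nH.
  have Hx : forall x, 0 < x -> ~ delta (distr_fun P ST x) < 1.
    by move=> x x0 dx; apply: nH; exists x.
  have L1 : Linf P (fun _ => -1).
    split; first exact: measurable_cst.
    exists 1; apply: negligibleS (negligible_set0 P) => w /= h.
    by apply: h; rewrite normrN normr1.
  by have := H _ L1; rewrite (rho_inf P delta Hd S0 ST mST h0 Hx).
- exact: Hfin.
- move=> [a [/andP[a0 a1] Hs]]; apply: Hfin.
  have [e [e0 pe]] := eps P ST mST h0 hn.
  exists (e / 2); split; first by rewrite divr_gt0.
  set F := distr_fun P ST (e / 2).
  have mA : measurable [set w | e <= ST w] by exact: meas_ge.
  have F1 : F < 1.
    apply: (@le_lt_trans _ _ (pr P (~` [set w | e <= ST w]))).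
      apply: pr_le; [exact: meas_le|exact: measurableC|].
      rewrite (_ : _ `\` _ = set0); first exact: negligible_set0.
      apply/seteqP; split => w //= [h1 h2]; apply: h2 => h3; lra.
    rewrite /pr probability_setC// -(fineK (Pfin P _ mA)) -EFinB /=.
    by rewrite /pr in pe; lra.
  have F0 : 0 <= F by exact: F_ge0.
  case: Hd => dmono _ _ d1.
  have [aF|Fa] := leP a F.
    by rewrite -d1; apply: Hs => //.
  apply: (@le_lt_trans _ _ (delta a)).
    by apply: dmono => //; exact: ltW.
  by rewrite -d1; apply: Hs.
Qed.
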